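(* Let $i\in\{1,\ldots,n\}$ and suppose that for every $j\in\{1,\ldots,i\}$ the implication $$\hat F(\mathbf{1}^j,\mathbf{X}_{j+1}^n,\mathbf{1}^j,\overline{\mathbf{X}}_{j+1}^n,\mathbf{Y})\Rightarrow \hat F(\mathbf{1}^{j-1}0,\mathbf{X}_{j+1}^n,\mathbf{1}^{j-1}1,\overline{\mathbf{X}}_{j+1}^n,\mathbf{Y})\vee \hat F(\mathbf{1}^{j-1}1,\mathbf{X}_{j+1}^n,\mathbf{1}^{j-1}0,\overline{\mathbf{X}}_{j+1}^n,\mathbf{Y})$$ is valid (for all values of $\mathbf{X}_{j+1}^n,\overline{\mathbf{X}}_{j+1}^n,\mathbf{Y}$). Then $\exists\mathbf{X}_1^i\,F(\mathbf{X},\mathbf{Y})\Leftrightarrow \hat F(\mathbf{1}^i,\mathbf{X}_{i+1}^n,\mathbf{1}^i,\neg\mathbf{X}_{i+1}^n,\mathbf{Y})$.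
   Context: $\mathbf{X}=(x_1,\ldots,x_n)$ are outputs and $\mathbf{Y}=(y_1,\ldots,y_m)$ inputs; $\mathbf{X}_i^j=(x_i,\ldots,x_j)$. An NNF formula uses only $\wedge,\vee$ and negations applied to variables, represented as a DAG with $\wedge/\vee$ internal nodes and literal leaves. Given a fixed NNF DAG for $F(\mathbf{X},\mathbf{Y})$, $\hat F(\mathbf{X},\overline{\mathbf{X}},\mathbf{Y})$ is obtained by replacing each leaf $\neg x_i$ ($x_i\in\mathbf{X}$) by a fresh variable $\overline{x_i}$, $\overline{\mathbf{X}}=(\overline{x_1},\ldots,\overline{x_n})$. For bit-vectors $\mathbf{b},\mathbf{c}$ of length $j$, $\hat F(\mathbf{b},\mathbf{X}_{j+1}^n,\mathbf{c},\overline{\mathbf{X}}_{j+1}^n,\mathbf{Y})$ denotes $\hat F$ with $(x_1,\ldots,x_j):=\mathbf{b}$ and $(\overline{x_1},\ldots,\overline{x_j}):=\mathbf{c}$; writing $\neg\mathbf{X}_{j+1}^n$ in place of $\overline{\mathbf{X}}_{j+1}^n$ means $\overline{x_k}:=\neg x_k$ for $k>j$. $\mathbf{1}^{j-1}0$ is the length-$j$ vector with $j-1$ ones followed by a $0$ (similarly $\mathbf{1}^{j-1}1=\mathbf{1}^j$), and $\mathbf{1}^j$ the all-ones vector of length $j$. *)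

(* Defs.v *)
From mathcomp Require Import all_boot.
Set Implicit Arguments. Unset Strict Implicit. Unset Printing Implicit Defensive.

(* NNF formulas over outputs x_0..x_{n-1} ('I_n) and inputs y_0..y_{m-1} ('I_m).
   A DAG is represented by its unfolding into a tree (same semantics). *)
Inductive nnf (n m : nat) : Type :=
| NConst of bool
| NPosX of 'I_n
| NNegX of 'I_n
| NPosY of 'I_m
| NNegY of 'I_m
| NAnd of nnf n m & nnf n m
| NOr of nnf n m & nnf n m.

Fixpoint eval_nnf n m (F : nnf n m) (x : 'I_n -> bool) (y : 'I_m -> bool) : bool :=
  match F with
  | NConst b => b
  | NPosX i => x i
  | NNegX i => ~~ x i
  | NPosY k => y k
  | NNegY k => ~~ y k
  | NAnd f g => eval_nnf f x y && eval_nnf g x y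
  | NOr f g => eval_nnf f x y || eval_nnf g x y
  end.

(* Semantics of Fhat(X, Xbar, Y): each leaf ~x_i is replaced by the fresh variable xbar_i. *)
Fixpoint eval_hat n m (F : nnf n m) (x xb : 'I_n -> bool) (y : 'I_m -> bool) : bool :=
  match F with
  | NConst b => b
  | NPosX i => x i
  | NNegX i => xb i
  | NPosY k => y k
  | NNegY k => ~~ y k
  | NAnd f g => eval_hat f x xb y && eval_hat g x xb y
  | NOr f g => eval_hat f x xb y || eval_hat g x xb y
  end.

(* override j p x : the first j coordinates (0-based indices k < j, i.e. x_1..x_j
   in the paper's 1-based numbering) are set to p k, the rest taken from x. *)
Definition override n (j : nat) (p : nat -> bool) (x : 'I_n -> bool) : 'I_n -> bool :=
  fun k => if (k < j)%N then p k else x k.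

Definition ones : nat -> bool := fun _ => true.

(* The length-j prefix 1^{j-1} b (last position, index j-1, equals b). *)
Definition ones_last (j : nat) (b : bool) : nat -> bool :=
  fun k => if k == j.-1 then b else true.

(* Main.v *)
Require Import Defs.
From mathcomp Require Import all_boot.

Lemma hat_mono n m (F : nnf n m) (x x2 xb xb2 : 'I_n -> bool) y :
  (forall k, x k -> x2 k) -> (forall k, xb k -> xb2 k) ->
  eval_hat F x xb y -> eval_hat F x2 xb2 y.
Proof.
move=> hx hxb; elim: F => /= [b|k|k|k|k|f IHf g IHg|f IHf g IHg] //; try exact: hx; try exact: hxb.
- by move=> /andP[a b]; apply/andP; split; [apply: IHf | apply: IHg].
- by move=> /orP[a|b]; apply/orP; [left; apply: IHf | right; apply: IHg].
Qed.

Lemma nnf_hat n m (F : nnf n m) x y : eval_nnf F x y = eval_hat F x (fun k => ~~ x k) y.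
Proof. by elim: F => //= f -> g ->. Qed.

Lemma back n m (F : nnf n m) (i : nat) y :
  (forall j : nat, (1 <= j <= i)%N ->
     forall (x xb : 'I_n -> bool),
       eval_hat F (override j ones x) (override j ones xb) y ->
       eval_hat F (override j (ones_last j false) x) (override j (ones_last j true) xb) y
       || eval_hat F (override j (ones_last j true) x) (override j (ones_last j false) xb) y) ->
  forall j, (j <= i)%N -> forall x : 'I_n -> bool,
    eval_hat F (override j ones x) (override j ones (fun k => ~~ x k)) y ->
    exists x' : 'I_n -> bool,
        (forall k : 'I_n, (j <= k)%N -> x' k = x k) /\ eval_nnf F x' y.
Proof.
move=> H; elim=> [|j IH] hj x G.
  exists x; split => //; rewrite nnf_hat; apply: hat_mono G => k; by rewrite /override.
have hj' : (1 <= j.+1 <= i)%N by rewrite hj.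
have D := H _ hj' x (fun k => ~~ x k) G.
have key : forall b, eval_hat F (override j.+1 (ones_last j.+1 b) x)
             (override j.+1 (ones_last j.+1 (~~ b)) (fun k => ~~ x k)) y ->
   exists x' : 'I_n -> bool,
        (forall k : 'I_n, (j.+1 <= k)%N -> x' k = x k) /\ eval_nnf F x' y.
  move=> b Db.
  pose u := fun k : 'I_n => if nat_of_ord k == j then b else x k.
  have G' : eval_hat F (override j ones u) (override j ones (fun k => ~~ u k)) y.
    apply: hat_mono Db => k; rewrite /override /ones_last /u /ones /=;
    by case: (ltngtP k j) => [h|h|->]; rewrite ?ltnS ?(ltnW h) ?leqnn //= ?(leqNgt k j) ?h ?eqxx //=;
      rewrite ?(gtn_eqF h) // ?(ltn_eqF h).
  have [x' [h1 h2]] := IH (ltnW hj) u G'.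
  exists x'; split => // k hk; rewrite h1 ?(ltnW hk) // /u.
  by rewrite (gtn_eqF hk).
by case/orP: D => [D|D]; [apply: (key false) | apply: (key true)].
Qed.

Theorem theorem2 (n m : nat) (F : nnf n m) (i : nat) :
  (1 <= i <= n)%N ->
  (forall j : nat, (1 <= j <= i)%N ->
     forall (x xb : 'I_n -> bool) (y : 'I_m -> bool),
       eval_hat F (override j ones x) (override j ones xb) y ->
       eval_hat F (override j (ones_last j false) x) (override j (ones_last j true) xb) y
       || eval_hat F (override j (ones_last j true) x) (override j (ones_last j false) xb) y) ->
  forall (x : 'I_n -> bool) (y : 'I_m -> bool),
    (exists x' : 'I_n -> bool,
        (forall k : 'I_n, (i <= k)%N -> x' k = x k) /\ eval_nnf F x' y)
    <->
    eval_hat F (override i ones x) (override i ones (fun k => ~~ x k)) y.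
Proof.
move=> /andP[_ hin] H x y; split.
  move=> [x' [h1 h2]]; move: h2; rewrite nnf_hat; apply: hat_mono => k;
  rewrite /override /ones; case: ltnP => // hk; by rewrite h1.
move=> G; exact: (@back n m F i y (fun j hj x xb => H j hj x xb y) i (leqnn i) x G).
Qed.
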